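(* Let $B>0$. Suppose $y(t,x)$ is a solution of $y_{t}+By_{xxxx}=0$ for $x>0$ (or for $x<0$) and $t>0$ which has the self-similar form $y(t,x)=(Bt)^{1/4}Z\big(x/(Bt)^{1/4}\big)$ for some function $Z$. Then there are constants $C_1,C_2,C_3,C_4\in\mathbb{R}$ such that $$y(t,x)=(Bt)^{1/4}\sum_{i=1}^{4}C_{i}\,z_{i}\!\left(\frac{x}{(Bt)^{1/4}}\right),\qquad x>0\ (\text{or } x<0),\ t>0,$$ where $z_{1}(u)={}_{1}F_{3}(-\tfrac{1}{4};\tfrac{1}{4},\tfrac{1}{2},\tfrac{3}{4};\tfrac{u^{4}}{256})$, $z_{2}(u)=u$, $z_{3}(u)=u^{2}\,{}_{1}F_{3}(\tfrac{1}{4};\tfrac{3}{4},\tfrac{5}{4},\tfrac{3}{2};\tfrac{u^{4}}{256})$, $z_{4}(u)=u^{3}\,{}_{1}F_{3}(\tfrac{1}{2};\tfrac{5}{4},\tfrac{3}{2},\tfrac{7}{4};\tfrac{u^{4}}{256})$.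
   Context: ${}_{p}F_{q}(a_{1},\ldots,a_{p};b_{1},\ldots,b_{q};\nu)=\sum_{k\ge0}\frac{(a_{1})_{k}\cdots(a_{p})_{k}}{(b_{1})_{k}\cdots(b_{q})_{k}}\frac{\nu^{k}}{k!}$ is the generalized hypergeometric function, with Pochhammer symbol $(\lambda)_{k}=\lambda(\lambda+1)\cdots(\lambda+k-1)$, $(\lambda)_0=1$. $B$ is a positive constant (the Mullins coefficient). *)

(* Defs.v *)
From Stdlib Require Import Reals List.
From Coquelicot Require Import Coquelicot.
Import ListNotations.
Open Scope R_scope.

Fixpoint pochhammer (a : R) (k : nat) : R :=
  match k with
  | O => 1
  | S k' => pochhammer a k' * (a + INR k')
  end.

Definition hyper_term (as_ bs : list R) (v : R) (k : nat) : R :=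
  fold_right Rmult 1 (map (fun a => pochhammer a k) as_)
  / fold_right Rmult 1 (map (fun b => pochhammer b k) bs)
  * v ^ k / INR (Stdlib.Arith.Factorial.fact k).

Definition hypergeom (as_ bs : list R) (v : R) : R :=
  Series (hyper_term as_ bs v).

Definition z1 (u : R) : R :=
  hypergeom [-(1/4)] [1/4; 1/2; 3/4] (u ^ 4 / 256).
Definition z2 (u : R) : R := u.
Definition z3 (u : R) : R :=
  u ^ 2 * hypergeom [1/4] [3/4; 5/4; 3/2] (u ^ 4 / 256).
Definition z4 (u : R) : R :=
  u ^ 3 * hypergeom [1/2] [5/4; 3/2; 7/4] (u ^ 4 / 256).

Definition halfline (pos : bool) (x : R) : Prop :=
  if pos then 0 < x else x < 0.

Definition is_solution (B : R) (pos : bool) (y : R -> R -> R) : Prop :=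
  forall t x, 0 < t -> halfline pos x ->
    ex_derive (fun s => y s x) t /\
    (forall k, (k < 4)%nat -> ex_derive (Derive_n (fun z => y t z) k) x) /\
    Derive (fun s => y s x) t + B * Derive_n (fun z => y t z) 4 x = 0.

(* Main.v *)
Require Import Defs.
From Stdlib Require Import Reals List Lra Lia.
From Coquelicot Require Import Coquelicot.
Import ListNotations.
Open Scope R_scope.

Definition det3 a b c d e f g h i : R := a*(e*i - f*h) - b*(d*i - f*g) + c*(d*h - e*g).
Definition det4 a0 a1 a2 a3 b0 b1 b2 b3 c0 c1 c2 c3 d0 d1 d2 d3 : R :=
  a0 * det3 b1 b2 b3 c1 c2 c3 d1 d2 d3 - a1 * det3 b0 b2 b3 c0 c2 c3 d0 d2 d3
  + a2 * det3 b0 b1 b3 c0 c1 c3 d0 d1 d3 - a3 * det3 b0 b1 b2 c0 c1 c2 d0 d1 d2.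

Definition sol_jet (D : R -> Prop) (J : nat -> R -> R) : Prop :=
  forall x, D x -> is_derive (J 0%nat) x (J 1%nat x) /\ is_derive (J 1%nat) x (J 2%nat x)
    /\ is_derive (J 2%nat) x (J 3%nat x) /\ is_derive (J 3%nat) x ((x * J 1%nat x - J 0%nat x) / 4).

Definition Wr (J1 J2 J3 J4 : nat -> R -> R) (x : R) : R :=
  det4 (J1 0%nat x) (J2 0%nat x) (J3 0%nat x) (J4 0%nat x)
       (J1 1%nat x) (J2 1%nat x) (J3 1%nat x) (J4 1%nat x)
       (J1 2%nat x) (J2 2%nat x) (J3 2%nat x) (J4 2%nat x)
       (J1 3%nat x) (J2 3%nat x) (J3 3%nat x) (J4 3%nat x).

Lemma Deta (f : R -> R) x l : is_derive f x l -> Derive (fun y => f y) x = l.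
Proof. intros H. apply is_derive_unique. exact H. Qed.

Lemma Wr_derive D J1 J2 J3 J4 x : sol_jet D J1 -> sol_jet D J2 -> sol_jet D J3 -> sol_jet D J4 ->
  D x -> is_derive (Wr J1 J2 J3 J4) x 0.
Proof.
  intros H1 H2 H3 H4 Dx.
  destruct (H1 x Dx) as (a0&a1&a2&a3).
  destruct (H2 x Dx) as (b0&b1&b2&b3).
  destruct (H3 x Dx) as (c0&c1&c2&c3).
  destruct (H4 x Dx) as (d0&d1&d2&d3).
  set (f00 := J1 0%nat) in *. set (f01 := J2 0%nat) in *. set (f02 := J3 0%nat) in *. set (f03 := J4 0%nat) in *.
  set (f10 := J1 1%nat) in *. set (f11 := J2 1%nat) in *. set (f12 := J3 1%nat) in *. set (f13 := J4 1%nat) in *.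
  set (f20 := J1 2%nat) in *. set (f21 := J2 2%nat) in *. set (f22 := J3 2%nat) in *. set (f23 := J4 2%nat) in *.
  set (f30 := J1 3%nat) in *. set (f31 := J2 3%nat) in *. set (f32 := J3 3%nat) in *. set (f33 := J4 3%nat) in *.
  unfold Wr, det4, det3. fold f00 f01 f02 f03 f10 f11 f12 f13 f20 f21 f22 f23 f30 f31 f32 f33.
  auto_derive.
  - repeat split; eexists; eassumption.
  - repeat match goal with
    | H : is_derive ?f x ?l |- _ => rewrite (Deta f x l H); clear H
    end.
    clearbody f00 f01 f02 f03 f10 f11 f12 f13 f20 f21 f22 f23 f30 f31 f32 f33. generalize (f00 x) (f01 x) (f02 x) (f03 x) (f10 x) (f11 x) (f12 x) (f13 x) (f20 x) (f21 x) (f22 x) (f23 x) (f30 x) (f31 x) (f32 x) (f33 x). generalize (x:R). intros. field.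
Qed.

Lemma Wr_const D J1 J2 J3 J4 a b : sol_jet D J1 -> sol_jet D J2 -> sol_jet D J3 -> sol_jet D J4 ->
  (forall x, Rmin a b <= x <= Rmax a b -> D x) -> Wr J1 J2 J3 J4 b = Wr J1 J2 J3 J4 a.
Proof.
  intros H1 H2 H3 H4 HD.
  destruct (MVT_gen (Wr J1 J2 J3 J4) a b (fun _ => 0)) as (c & _ & Hc).
  - intros x Hx. apply (Wr_derive D); auto. apply HD; lra.
  - intros x Hx. apply continuity_pt_filterlim. apply (ex_derive_continuous (Wr J1 J2 J3 J4) x).
    eexists. apply (Wr_derive D); auto.
  - lra.
Qed.

Definition rec_ok (c : nat -> R) : Prop := forall n,
  INR (S n) * INR (S (S n)) * INR (S (S (S n))) * INR (S (S (S (S n)))) * c (S (S (S (S n))))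
  = (INR n - 1) / 4 * c n.

Lemma term_le_sum (f : nat -> R) N k : (forall i, 0 <= f i) -> (k <= N)%nat -> f k <= sum_f_R0 f N.
Proof.
  intros Hf. induction N as [|N IH]; intros Hk.
  - assert (k = 0%nat) by lia. subst. simpl. lra.
  - simpl. destruct (Nat.eq_dec k (S N)) as [->|Hne].
    + assert (0 <= sum_f_R0 f N).
      { clear IH Hk. induction N; simpl; [apply Hf| specialize (Hf (S N)); lra]. }
      lra.
    + specialize (IH ltac:(lia)). specialize (Hf (S N)). lra.
Qed.

Lemma rec_bounded c r : rec_ok c -> exists M, forall n, Rabs (c n * r ^ n) <= M.
Proof.
  intros Hc.
  destruct (INR_unbounded (r ^ 4)) as [N HN].
  set (f := fun k => Rabs (c k * r ^ k)).
  exists (sum_f_R0 f (N + 3)).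
  assert (Hf : forall i, 0 <= f i) by (intros; apply Rabs_pos).
  assert (H : forall n m, (m <= n)%nat -> f m <= sum_f_R0 f (N + 3)).
  { induction n as [|n IH]; intros m Hm.
    - apply term_le_sum; auto; lia.
    - destruct (Compare_dec.le_lt_dec m (N + 3)) as [Hle|Hlt].
      + apply term_le_sum; auto.
      + destruct m as [|[|[|[|m]]]]; try lia.
        apply Rle_trans with (f m); [| apply IH; lia].
        unfold f.
        assert (Hm2 : (N <= m)%nat) by lia.
        apply le_INR in Hm2.
        specialize (Hc m).
        set (P := INR (S m) * INR (S (S m)) * INR (S (S (S m))) * INR (S (S (S (S m))))).
        fold P in Hc.
        assert (HP : 0 < P).
        { unfold P. repeat apply Rmult_lt_0_compat; apply lt_0_INR; lia. }
        assert (Hcm : c (S (S (S (S m)))) = (INR m - 1) / 4 * c m / P).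
        { rewrite <- Hc. field. lra. }
        rewrite Hcm.
        replace (r ^ S (S (S (S m)))) with (r ^ 4 * r ^ m) by (simpl; ring).
        replace ((INR m - 1) / 4 * c m / P * (r ^ 4 * r ^ m)) with
          (((INR m - 1) / 4 * r ^ 4 / P) * (c m * r ^ m)) by (field; lra).
        rewrite Rabs_mult.
        rewrite <- (Rmult_1_l (Rabs (c m * r ^ m))) at 2.
        apply Rmult_le_compat_r; [apply Rabs_pos|].
        assert (Hr4 : 0 <= r ^ 4) by (replace (r^4) with ((r*r)*(r*r)) by ring; apply Rle_0_sqr).
        assert (Hm0 := pos_INR m).
        assert (HP' : (INR m + 1) * (INR m + 1) <= 4 * P).
        { unfold P. rewrite !S_INR.
          assert (1 <= (INR m + 1 + 1 + 1) * (INR m + 1 + 1 + 1 + 1)) by nra.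
          assert (0 <= (INR m + 1) * (INR m + 1 + 1)) by nra.
          nra. }
        assert (Habs : Rabs (INR m - 1) <= INR m + 1) by (apply Rabs_le; lra).
        assert (Hb : Rabs (INR m - 1) * r ^ 4 <= (INR m + 1) * (INR m + 1)).
        { apply Rmult_le_compat; try lra. apply Rabs_pos. }
        replace ((INR m - 1) / 4 * r ^ 4 / P) with ((INR m - 1) * r ^ 4 * / (4 * P)) by (field; lra).
        rewrite Rabs_mult, Rabs_mult, (Rabs_right (r^4)), (Rabs_right (/ (4 * P))).
        2: apply Rle_ge, Rlt_le, Rinv_0_lt_compat; lra. 2: lra.
        apply Rmult_le_reg_r with (4 * P); [lra|].
        rewrite Rmult_assoc, Rinv_l by lra. lra. }
  intros n. apply (H n n). lia.
Qed.

Lemma rec_radius c : rec_ok c -> CV_radius c = p_infty.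
Proof.
  intros Hc.
  destruct (CV_radius_bounded c) as [Hub _].
  destruct (CV_radius c) as [l| |] eqn:E.
  - exfalso. specialize (Hub (Rabs l + 1) (rec_bounded c _ Hc)). simpl in Hub.
    assert (l <= Rabs l) by apply Rle_abs. lra.
  - reflexivity.
  - exfalso. specialize (Hub 0 (rec_bounded c _ Hc)). simpl in Hub. exact Hub.
Qed.

Definition Dn (k : nat) (c : nat -> R) : nat -> R := Nat.iter k PS_derive c.
Definition Jc (c : nat -> R) (k : nat) : R -> R := PSeries (Dn k c).

Lemma Dn_radius c k : rec_ok c -> CV_radius (Dn k c) = p_infty.
Proof.
  intros Hc. induction k as [|k IH]; simpl.
  - apply rec_radius; auto.
  - unfold Dn in *. simpl. rewrite CV_radius_derive. exact IH.
Qed.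

Lemma Jc_derive c k x : rec_ok c -> is_derive (Jc c k) x (Jc c (S k) x).
Proof.
  intros Hc. unfold Jc. apply is_derive_PSeries. rewrite Dn_radius; auto. exact I.
Qed.

Lemma Jc_ex c k x : rec_ok c -> ex_pseries (Dn k c) x.
Proof.
  intros Hc. apply CV_radius_inside. rewrite Dn_radius; auto. exact I.
Qed.

Lemma Jc_ode c x : rec_ok c -> Jc c 4 x = (x * Jc c 1 x - Jc c 0 x) / 4.
Proof.
  intros Hc. unfold Jc.
  rewrite <- PSeries_incr_1.
  rewrite <- PSeries_minus.
  2: apply ex_pseries_incr_1, (Jc_ex c 1), Hc.
  2: apply (Jc_ex c 0), Hc.
  unfold Rdiv. rewrite Rmult_comm, <- PSeries_scal.
  apply PSeries_ext. intros n.
  unfold PS_scal, PS_minus, PS_incr_1, Dn. simpl.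
  unfold scal, mult, plus, opp, zero; simpl.
  unfold mult; simpl.
  destruct n as [|n]; unfold PS_derive.
  - specialize (Hc 0%nat). simpl in Hc |- *. lra.
  - specialize (Hc (S n)).
    match type of Hc with ?L = ?R => transitivity L; [ring| rewrite Hc; field] end.
Qed.

Definition gh (as_ bs : list R) (k : nat) : R :=
  fold_right Rmult 1 (map (fun a => pochhammer a k) as_)
  / fold_right Rmult 1 (map (fun b => pochhammer b k) bs)
  / INR (Stdlib.Arith.Factorial.fact k) / 256 ^ k.

Definition cr (as_ bs : list R) (r : nat) (n : nat) : R :=
  if Nat.eqb (n mod 4) r then gh as_ bs (n / 4) else 0.

Lemma mod4 K j : (j < 4)%nat -> ((4 * K + j) mod 4 = j /\ (4 * K + j) / 4 = K)%nat.
Proof.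
  intros Hj. split.
  - symmetry. apply (Nat.mod_unique _ _ K); lia.
  - symmetry. apply (Nat.div_unique _ _ _ j); lia.
Qed.

Lemma sum4 (a b : nat -> R) r : (r < 4)%nat ->
  (forall K j, (j < 4)%nat -> a (4 * K + j)%nat = if Nat.eqb j r then b K else 0) ->
  forall K, sum_n a (4 * K + 3) = sum_n b K.
Proof.
  intros Hr Ha K. induction K as [|K IH].
  - simpl. rewrite !sum_Sn, !sum_O. unfold plus; simpl.
    pose proof (Ha 0%nat 0%nat) as H0. pose proof (Ha 0%nat 1%nat) as H1.
    pose proof (Ha 0%nat 2%nat) as H2. pose proof (Ha 0%nat 3%nat) as H3.
    simpl in H0, H1, H2, H3.
    rewrite H0, H1, H2, H3 by lia.
    destruct r as [|[|[|[|r]]]]; simpl; try lia; ring.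
  - replace (4 * S K + 3)%nat with (S (S (S (S (4 * K + 3))))) by lia.
    rewrite !sum_Sn, IH.
    replace (S (S (S (S (4 * K + 3))))) with (4 * S K + 3)%nat by lia.
    replace (S (S (S (4 * K + 3)))) with (4 * S K + 2)%nat by lia.
    replace (S (S (4 * K + 3))) with (4 * S K + 1)%nat by lia.
    replace (S (4 * K + 3)) with (4 * S K + 0)%nat by lia.
    rewrite !Ha by lia. unfold plus; simpl.
    destruct r as [|[|[|[|r]]]]; simpl; try lia; ring.
Qed.

Lemma hyper_term_gh as_ bs u k :
  hyper_term as_ bs (u ^ 4 / 256) k = gh as_ bs k * u ^ (4 * k).
Proof.
  unfold hyper_term, gh. rewrite pow_mult. unfold Rdiv.
  rewrite Rpow_mult_distr, pow_inv. ring.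
Qed.

Lemma link as_ bs r u : (r < 4)%nat -> rec_ok (cr as_ bs r) ->
  u ^ r * hypergeom as_ bs (u ^ 4 / 256) = Jc (cr as_ bs r) 0 u.
Proof.
  intros Hr Hc.
  assert (Hs : is_series (fun n => cr as_ bs r n * u ^ n) (Jc (cr as_ bs r) 0 u)).
  { apply is_pseries_R. apply PSeries_correct. apply (Jc_ex _ 0). exact Hc. }
  set (b := fun K => gh as_ bs K * u ^ (4 * K + r)).
  assert (Hb : is_series b (Jc (cr as_ bs r) 0 u)).
  { unfold is_series.
    assert (E : forall K, sum_n b K = sum_n (fun n => cr as_ bs r n * u ^ n) (4 * K + 3)).
    { intros K. symmetry. apply (sum4 _ _ r Hr). intros K' j Hj.
      unfold cr. destruct (mod4 K' j Hj) as [-> ->].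
      destruct (Nat.eqb j r) eqn:E; [apply Nat.eqb_eq in E; subst; reflexivity| ring]. }
    apply (filterlim_ext (fun K => sum_n (fun n => cr as_ bs r n * u ^ n) (4 * K + 3))).
    { intros; symmetry; apply E. }
    apply (is_lim_seq_subseq (sum_n (fun n => cr as_ bs r n * u ^ n)) (Finite _) (fun K => 4 * K + 3)%nat).
    - apply eventually_subseq. intros; lia.
    - exact Hs. }
  rewrite <- (is_series_unique _ _ Hb).
  unfold hypergeom. rewrite <- Series_scal_l. apply Series_ext. intros K.
  rewrite hyper_term_gh. unfold b. rewrite pow_add. ring.
Qed.

Lemma poch_pos b k : 0 < b -> 0 < pochhammer b k.
Proof.
  intros Hb. induction k as [|k IH]; simpl; [lra|].
  apply Rmult_lt_0_compat; auto. pose proof (pos_INR k); lra.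
Qed.

Lemma gh_S a b1 b2 b3 K : 0 < b1 -> 0 < b2 -> 0 < b3 ->
  gh [a] [b1; b2; b3] (S K) = gh [a] [b1; b2; b3] K * (a + INR K)
     / ((b1 + INR K) * (b2 + INR K) * (b3 + INR K)) / INR (S K) / 256.
Proof.
  intros H1 H2 H3. unfold gh. simpl map. simpl fold_right.
  change (pochhammer a (S K)) with (pochhammer a K * (a + INR K)).
  change (pochhammer b1 (S K)) with (pochhammer b1 K * (b1 + INR K)).
  change (pochhammer b2 (S K)) with (pochhammer b2 K * (b2 + INR K)).
  change (pochhammer b3 (S K)) with (pochhammer b3 K * (b3 + INR K)).
  change (Factorial.fact (S K)) with (S K * Factorial.fact K)%nat.
  rewrite mult_INR. simpl pow.
  pose proof (poch_pos b1 K H1). pose proof (poch_pos b2 K H2). pose proof (poch_pos b3 K H3).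
  pose proof (pos_INR K). pose proof (lt_0_INR _ (Arith.Factorial.lt_O_fact K)).
  assert (0 < 256 ^ K) by (apply pow_lt; lra).
  rewrite S_INR.
  field. repeat split; lra.
Qed.

Lemma rec_ok_gen a b1 b2 b3 r : (r < 4)%nat -> 0 < b1 -> 0 < b2 -> 0 < b3 ->
  (forall x, 0 <= x ->
     (4*x + INR r + 1) * (4*x + INR r + 2) * (4*x + INR r + 3) * (4*x + INR r + 4)
       * ((a + x) / ((b1 + x) * (b2 + x) * (b3 + x)) / (x + 1) / 256)
     = (4*x + INR r - 1) / 4) ->
  rec_ok (cr [a] [b1; b2; b3] r).
Proof.
  intros Hr H1 H2 H3 Hid n.
  pose proof (Nat.div_mod n 4 ltac:(lia)) as Hn.
  pose proof (Nat.mod_upper_bound n 4 ltac:(lia)) as Hj.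
  set (K := (n / 4)%nat) in *. set (j := (n mod 4)%nat) in *.
  clearbody K j. subst n.
  replace (S (S (S (S (4 * K + j))))) with (4 * S K + j)%nat by lia.
  unfold cr. destruct (mod4 K j Hj) as [-> ->]. destruct (mod4 (S K) j Hj) as [-> ->].
  destruct (Nat.eqb j r) eqn:E; [|ring].
  apply Nat.eqb_eq in E. subst j.
  rewrite gh_S by auto.
  rewrite !S_INR, plus_INR, mult_INR. 
  replace (INR 4) with 4 by (simpl; ring).
  pose proof (pos_INR K) as HK.
  specialize (Hid (INR K) HK).
  repeat rewrite ?S_INR, ?plus_INR, ?mult_INR.
  replace (INR 4) with 4 by (simpl; ring).
  match type of Hid with ?L = _ => transitivity (L * gh [a] [b1; b2; b3] K) end.
  - change (INR 0) with 0. field. repeat split; lra.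
  - rewrite Hid. clear Hid. ring.
Qed.

Lemma rec1 : rec_ok (cr [-(1/4)] [1/4; 1/2; 3/4] 0).
Proof.
  apply rec_ok_gen; try lra; try lia.
  intros x Hx. simpl INR. field. repeat split; lra.
Qed.
Lemma rec3 : rec_ok (cr [1/4] [3/4; 5/4; 3/2] 2).
Proof.
  apply rec_ok_gen; try lra; try lia.
  intros x Hx. simpl INR. field. repeat split; lra.
Qed.
Lemma rec4 : rec_ok (cr [1/2] [5/4; 3/2; 7/4] 3).
Proof.
  apply rec_ok_gen; try lra; try lia.
  intros x Hx. simpl INR. field. repeat split; lra.
Qed.

Lemma Rpower_1_l a : Rpower 1 a = 1.
Proof. unfold Rpower. rewrite ln_1, Rmult_0_r. apply exp_0. Qed.

Lemma halfline_loc pos x (P : R -> Prop) : halfline pos x ->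
  (forall z, halfline pos z -> P z) -> locally x P.
Proof.
  intros Hx HP. destruct pos; simpl in Hx.
  - apply (locally_interval P x (Finite 0) p_infty).
    + exact Hx.
    + exact I.
    + intros z Hz _. apply HP. exact Hz.
  - apply (locally_interval P x m_infty (Finite 0)).
    + exact I.
    + exact Hx.
    + intros z _ Hz. apply HP. exact Hz.
Qed.

Lemma Z_jet B pos y Z : 0 < B -> is_solution B pos y ->
  (forall t x, 0 < t -> halfline pos x ->
     y t x = Rpower (B * t) (1/4) * Z (x / Rpower (B * t) (1/4))) ->
  sol_jet (halfline pos) (fun k => Derive_n Z k).
Proof.
  intros HB Hsol Hy. rename Z into Zf.
  set (t0 := / B).
  assert (Ht0 : 0 < t0) by (apply Rinv_0_lt_compat; auto).
  assert (Hs0 : Rpower (B * t0) (1/4) = 1).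
  { unfold t0. rewrite Rinv_r by lra. apply Rpower_1_l. }
  assert (Hy0 : forall z, halfline pos z -> y t0 z = Zf z).
  { intros z Hz. rewrite Hy by auto. rewrite Hs0. unfold Rdiv. rewrite Rinv_1, Rmult_1_r, Rmult_1_l. reflexivity. }
  assert (Hn : forall k z, halfline pos z -> Derive_n (y t0) k z = Derive_n Zf k z).
  { intros k z Hz. apply Derive_n_ext_loc. apply (halfline_loc pos z); auto. }
  assert (Hex : forall k x, (k < 4)%nat -> halfline pos x -> is_derive (Derive_n Zf k) x (Derive_n Zf (S k) x)).
  { intros k x Hk Hx. destruct (Hsol t0 x Ht0 Hx) as (_ & Hd & _).
    specialize (Hd k Hk).
    assert (Hd' : ex_derive (Derive_n Zf k) x).
    { apply (ex_derive_ext_loc (Derive_n (y t0) k)); auto.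
      apply (halfline_loc pos x); auto. }
    apply (Derive_correct _ _ Hd'). }
  intros x Hx.
  split; [apply (Hex 0%nat); auto; lia|].
  split; [apply (Hex 1%nat); auto; lia|].
  split; [apply (Hex 2%nat); auto; lia|].
  assert (H3 := Hex 3%nat x ltac:(lia) Hx).
  enough (E : Derive_n Zf 4 x = (x * Derive_n Zf 1 x - Derive_n Zf 0 x) / 4) by (rewrite <- E; exact H3).
  destruct (Hsol t0 x Ht0 Hx) as (_ & _ & Hpde).
  rewrite Hn in Hpde by auto.
  assert (HZd : ex_derive Zf x).
  { pose proof (Hex 0%nat x ltac:(lia) Hx) as H0. eexists. exact H0. }
  assert (Ht : is_derive (fun s => y s x) t0 (B / 4 * (Zf x - x * Derive Zf x))).
  { apply (is_derive_ext_loc (fun s => exp (1/4 * ln (B * s)) * Zf (x / exp (1/4 * ln (B * s))))).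
    - apply (locally_interval (fun s => exp (1/4 * ln (B * s)) * Zf (x / exp (1/4 * ln (B * s))) = y s x) t0 (Finite 0) p_infty).
      + exact Ht0.
      + exact I.
      + intros s Hs _. rewrite Hy; auto.
    - auto_derive.
      + unfold Rpower in Hs0. rewrite Hs0, Rinv_1, Rmult_1_r.
        split; [apply Rmult_lt_0_compat; auto|].
        split; [exact HZd|].
        split; [apply Rmult_lt_0_compat; auto|].
        split; [lra|exact I].
      + unfold Rpower in Hs0. rewrite Hs0, Rinv_1, Rmult_1_r.
        change (Derive (fun x0 : R => Zf x0) x) with (Derive Zf x).
        replace (B * t0) with 1 by (unfold t0; field; lra).
        rewrite Rinv_1, !Rmult_1_r.
        change (Derive (fun x0 : R => Zf x0) x) with (Derive Zf x).
        field. }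
  assert (E : Derive (fun s : R => y s x) t0 = B / 4 * (Zf x - x * Derive Zf x)).
  { apply is_derive_unique. exact Ht. }
  rewrite E in Hpde.
  change (Derive_n Zf 1 x) with (Derive Zf x).
  change (Derive_n Zf 0 x) with (Zf x).
  apply (Rmult_eq_reg_l B); [|lra].
  lra.
Qed.

Definition c1 := cr [-(1/4)] [1/4; 1/2; 3/4] 0.
Definition c3 := cr [1/4] [3/4; 5/4; 3/2] 2.
Definition c4 := cr [1/2] [5/4; 3/2; 7/4] 3.
Definition J2 (k : nat) : R -> R :=
  match k with 0%nat => fun u => u | 1%nat => fun _ => 1 | _ => fun _ => 0 end.

Lemma Jc_jet c D : rec_ok c -> sol_jet D (Jc c).
Proof.
  intros Hc x _. split; [|split; [|split]]; try (apply Jc_derive; auto).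
  rewrite <- Jc_ode by auto. apply Jc_derive; auto.
Qed.

Lemma J2_jet D : sol_jet D J2.
Proof.
  intros x _. simpl. split; [|split; [|split]].
  - auto_derive; [exact I|reflexivity].
  - auto_derive; [exact I|reflexivity].
  - auto_derive; [exact I|reflexivity].
  - auto_derive; [exact I|field].
Qed.

Lemma cramer (J0 K1 K2 K3 K4 : nat -> R -> R) u :
  J0 0%nat u * Wr K1 K2 K3 K4 u = Wr J0 K2 K3 K4 u * K1 0%nat u + Wr K1 J0 K3 K4 u * K2 0%nat u
    + Wr K1 K2 J0 K4 u * K3 0%nat u + Wr K1 K2 K3 J0 u * K4 0%nat u.
Proof. unfold Wr, det4, det3. ring. Qed.

Lemma fold1 (l : list R) : fold_right Rmult 1 (map (fun a => pochhammer a 0) l) = 1.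
Proof. induction l as [|a l IH]; cbn [map fold_right]; [reflexivity| rewrite IH; simpl; ring]. Qed.

Lemma gh0 as_ bs : gh as_ bs 0 = 1.
Proof. unfold gh. rewrite !fold1. simpl. field. Qed.

Lemma cr_small as_ bs r j : (j < 4)%nat -> cr as_ bs r j = if Nat.eqb j r then 1 else 0.
Proof.
  intros Hj. unfold cr. destruct (mod4 0 j Hj) as [E1 E2].
  replace (4 * 0 + j)%nat with j in E1, E2 by lia. rewrite E1, E2, gh0. reflexivity.
Qed.

Lemma Jc_at0 c : Jc c 0 0 = c 0%nat /\ Jc c 1 0 = c 1%nat /\ Jc c 2 0 = 2 * c 2%nat /\ Jc c 3 0 = 6 * c 3%nat.
Proof.
  unfold Jc. rewrite !PSeries_0. unfold Dn. cbn [Nat.iter]. unfold PS_derive.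
  cbn [INR]. repeat split; simpl; lra.
Qed.

Lemma W0 : Wr (Jc c1) J2 (Jc c3) (Jc c4) 0 = 12.
Proof.
  unfold Wr.
  destruct (Jc_at0 c1) as (->&->&->&->).
  destruct (Jc_at0 c3) as (->&->&->&->).
  destruct (Jc_at0 c4) as (->&->&->&->).
  unfold c1, c3, c4. rewrite !cr_small by lia. cbn [Nat.eqb J2].
  unfold det4, det3. field.
Qed.

Lemma z1_eq u : z1 u = Jc c1 0 u.
Proof. unfold z1, c1. rewrite <- (link _ _ 0 u) by (try lia; exact rec1). simpl. ring. Qed.
Lemma z3_eq u : z3 u = Jc c3 0 u.
Proof. unfold z3, c3. rewrite <- (link _ _ 2 u) by (try lia; exact rec3). reflexivity. Qed.
Lemma z4_eq u : z4 u = Jc c4 0 u.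
Proof. unfold z4, c4. rewrite <- (link _ _ 3 u) by (try lia; exact rec4). reflexivity. Qed.

Theorem theorem2 (B : R) (pos : bool) (y : R -> R -> R) (Z : R -> R) :
  0 < B ->
  is_solution B pos y ->
  (forall t x, 0 < t -> halfline pos x ->
     y t x = Rpower (B * t) (1/4) * Z (x / Rpower (B * t) (1/4))) ->
  exists C1 C2 C3 C4 : R,
    forall t x, 0 < t -> halfline pos x ->
      y t x = Rpower (B * t) (1/4) *
        (C1 * z1 (x / Rpower (B * t) (1/4)) + C2 * z2 (x / Rpower (B * t) (1/4))
       + C3 * z3 (x / Rpower (B * t) (1/4)) + C4 * z4 (x / Rpower (B * t) (1/4))).
Proof.
  intros HB Hsol Hy.
  pose proof (Z_jet B pos y Z HB Hsol Hy) as HZ.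
  set (JZ := fun k => Derive_n Z k) in *.
  set (D := halfline pos) in *.
  set (u0 := if pos then 1 else -1).
  assert (Hu0 : D u0) by (unfold D, u0; destruct pos; simpl; lra).
  assert (J1s : sol_jet D (Jc c1)) by (apply Jc_jet, rec1).
  assert (J3s : sol_jet D (Jc c3)) by (apply Jc_jet, rec3).
  assert (J4s : sol_jet D (Jc c4)) by (apply Jc_jet, rec4).
  assert (J2s : sol_jet D J2) by apply J2_jet.
  assert (Hint : forall u, D u -> forall x, Rmin u0 u <= x <= Rmax u0 u -> D x).
  { intros u Du x Hx. unfold D, u0 in *. destruct pos; simpl in *.
    - assert (0 < Rmin 1 u) by (apply Rmin_glb_lt; lra). lra.
    - assert (Rmax (-1) u < 0) by (apply Rmax_lub_lt; lra). lra. }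
  assert (HZu : forall u, D u ->
    Z u = Wr JZ J2 (Jc c3) (Jc c4) u0 / 12 * z1 u + Wr (Jc c1) JZ (Jc c3) (Jc c4) u0 / 12 * z2 u
        + Wr (Jc c1) J2 JZ (Jc c4) u0 / 12 * z3 u + Wr (Jc c1) J2 (Jc c3) JZ u0 / 12 * z4 u).
  { intros u Du.
    pose proof (cramer JZ (Jc c1) J2 (Jc c3) (Jc c4) u) as Hc.
    assert (HW : Wr (Jc c1) J2 (Jc c3) (Jc c4) u = 12).
    { rewrite <- W0. apply (Wr_const (fun _ => True)); auto.
      - apply Jc_jet, rec1.
      - apply J2_jet.
      - apply Jc_jet, rec3.
      - apply Jc_jet, rec4. }
    rewrite HW in Hc.
    rewrite (Wr_const D JZ J2 (Jc c3) (Jc c4) u0 u) in Hc by first [apply (Hint u Du) | auto].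
    rewrite (Wr_const D (Jc c1) JZ (Jc c3) (Jc c4) u0 u) in Hc by first [apply (Hint u Du) | auto].
    rewrite (Wr_const D (Jc c1) J2 JZ (Jc c4) u0 u) in Hc by first [apply (Hint u Du) | auto].
    rewrite (Wr_const D (Jc c1) J2 (Jc c3) JZ u0 u) in Hc by first [apply (Hint u Du) | auto].
    rewrite z1_eq, z3_eq, z4_eq. unfold z2.
    change (JZ 0%nat u) with (Z u) in Hc. change (J2 0%nat u) with u in Hc.
    apply (Rmult_eq_reg_r 12); [|lra]. rewrite Hc. field. }
  exists (Wr JZ J2 (Jc c3) (Jc c4) u0 / 12), (Wr (Jc c1) JZ (Jc c3) (Jc c4) u0 / 12),
    (Wr (Jc c1) J2 JZ (Jc c4) u0 / 12), (Wr (Jc c1) J2 (Jc c3) JZ u0 / 12).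
  intros t x Ht Hx.
  rewrite Hy by auto.
  f_equal. apply HZu.
  assert (Hs : 0 < Rpower (B * t) (1/4)) by (unfold Rpower; apply exp_pos).
  unfold D, halfline in *. destruct pos.
  - apply Rdiv_lt_0_compat; auto.
  - unfold Rdiv. apply Rmult_neg_pos; auto. apply Rinv_0_lt_compat; auto.
Qed.
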